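(* Let $\bar u\in\mathbb{R}^n_{\ge0}$, $\mathcal{X}=[0,\bar u]$, and let $f:\mathcal{X}\to\mathbb{R}$ be nonnegative and DR-submodular. Let $\mathcal{P}\subseteq\mathcal{X}$ be a nonempty compact down-closed convex set, $x^*\in\arg\max_{x\in\mathcal{P}}f(x)$, $x\in\mathcal{P}$, $z\in\mathcal{P}$ with $z\le \bar u-x$, and $z^*:=x\vee x^*-x$. Then $$f(x\vee x^* )+f(x\wedge x^* )+f(z\vee z^* )+f(z\wedge z^* )\ge f(x^* ).$$
   Context: Vector inequalities are componentwise; $\vee,\wedge$ are coordinatewise max/min. A set $\mathcal{P}\subseteq[0,\bar u]$ is down-closed if $x\in\mathcal{P}$ and $0\le y\le x$ imply $y\in\mathcal{P}$. $f$ is DR-submodular if for all $a\le b$ in $\mathcal{X}$, $i\in[n]$, $k\ge0$ with $a+ke_i,b+ke_i\in\mathcal{X}$, $f(a+ke_i)-f(a)\ge f(b+ke_i)-f(b)$ ($e_i$ the $i$-th standard basis vector). *)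

(* Defs.v *)
From mathcomp Require Import all_boot.
From Stdlib Require Import Reals List.
Open Scope R_scope.

Definition Vec (n : nat) := 'I_n -> R.

Definition vzero {n} : Vec n := fun _ => 0.
Definition vle {n} (x y : Vec n) : Prop := forall i, x i <= y i.
Definition vjoin {n} (x y : Vec n) : Vec n := fun i => Rmax (x i) (y i).
Definition vmeet {n} (x y : Vec n) : Vec n := fun i => Rmin (x i) (y i).
Definition vadd {n} (x y : Vec n) : Vec n := fun i => x i + y i.
Definition vsub {n} (x y : Vec n) : Vec n := fun i => x i - y i.
Definition vscale {n} (t : R) (x : Vec n) : Vec n := fun i => t * x i.
Definition kei {n} (i : 'I_n) (k : R) : Vec n :=
  fun j => if j == i then k else 0.

Definition inBox {n} (ubar : Vec n) (x : Vec n) : Prop := vle vzero x /\ vle x ubar.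

Definition subset_box {n} (ubar : Vec n) (P : Vec n -> Prop) : Prop :=
  forall x, P x -> inBox ubar x.

Definition down_closed {n} (P : Vec n -> Prop) : Prop :=
  forall x y, P x -> vle vzero y -> vle y x -> P y.

Definition convex_set {n} (P : Vec n -> Prop) : Prop :=
  forall x y t, P x -> P y -> 0 <= t <= 1 -> P (vadd (vscale t x) (vscale (1 - t) y)).

(* topology of R^n (sup-norm balls; induces the usual topology) *)
Definition vball {n} (c : Vec n) (eps : R) (y : Vec n) : Prop :=
  forall i, Rabs (y i - c i) < eps.
Definition vopen {n} (U : Vec n -> Prop) : Prop :=
  forall x, U x -> exists eps, 0 < eps /\ forall y, vball x eps y -> U y.
Definition vcompact {n} (P : Vec n -> Prop) : Prop :=
  forall (I : Type) (U : I -> Vec n -> Prop),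
    (forall j, vopen (U j)) ->
    (forall x, P x -> exists j, U j x) ->
    exists l : list I, forall x, P x -> exists j, In j l /\ U j x.

Definition DR_submodular {n} (ubar : Vec n) (f : Vec n -> R) : Prop :=
  forall (a b : Vec n) (i : 'I_n) (k : R),
    inBox ubar a -> inBox ubar b -> vle a b -> 0 <= k ->
    inBox ubar (vadd a (kei i k)) -> inBox ubar (vadd b (kei i k)) ->
    f (vadd a (kei i k)) - f a >= f (vadd b (kei i k)) - f b.

(* Main.v *)
Require Import Defs.
From mathcomp Require Import all_boot.
From Stdlib Require Import Reals List Lra FunctionalExtensionality.
Open Scope R_scope.

Ltac ptw j :=
  repeat match goal with H : forall _ : 'I_?m, _ |- _ => specialize (H j) end.

Lemma box_mid n (u a d e : Vec n) :
  inBox u a -> inBox u (vadd a d) -> (forall j, 0 <= e j <= d j) ->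
  inBox u (vadd a e).
Proof.
  unfold inBox, vle, vadd, vzero. intros [H1 H2] [H3 H4] H5.
  split; intro j; ptw j; lra.
Qed.

Lemma DR_vec n (ubar : Vec n) f : DR_submodular ubar f ->
  forall a b d, inBox ubar a -> inBox ubar b -> vle a b -> vle vzero d ->
  inBox ubar (vadd a d) -> inBox ubar (vadd b d) ->
  f (vadd a d) - f a >= f (vadd b d) - f b.
Proof.
  intros HDR a b d Ha Hb Hab Hd Had Hbd.
  pose dk := fun (k : nat) (j : 'I_n) => if (nat_of_ord j < k)%nat then d j else 0%R.
  have Hdk : forall k j, 0 <= dk k j <= d j.
  { intros k j; unfold dk; case: (j < k)%nat; unfold vle, vzero in Hd; ptw j; lra. }
  have Main : forall k, f (vadd a (dk k)) - f a >= f (vadd b (dk k)) - f b.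
  { elim => [|k IH].
    - have E : forall c : Vec n, vadd c (dk O) = c.
      { intro c; apply functional_extensionality => j; unfold vadd, dk; simpl; lra. }
      rewrite !E; lra.
    - case: (ltnP k n) => Hk.
      + pose i := Ordinal Hk.
        have E : forall c : Vec n, vadd c (dk k.+1) = vadd (vadd c (dk k)) (kei i (d i)).
        { intro c; apply functional_extensionality => j; unfold vadd, dk, kei.
          have Hji : (j == i) = (nat_of_ord j == k).
          { by apply/eqP/eqP => [->|H] //; apply: val_inj. }
          rewrite Hji ltnS leq_eqVlt.
          case: (ltngtP (nat_of_ord j) k) => H /=.
          - lra.
          - lra.
          - have -> : d i = d j by congr d; apply: val_inj.
            lra. }
        have Ha' := box_mid _ _ _ _ _ Ha Had (Hdk k).
        have Hb' := box_mid _ _ _ _ _ Hb Hbd (Hdk k).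
        have Ha'' := box_mid _ _ _ _ _ Ha Had (Hdk k.+1).
        have Hb'' := box_mid _ _ _ _ _ Hb Hbd (Hdk k.+1).
        rewrite E in Ha''. rewrite E in Hb''.
        have H := HDR (vadd a (dk k)) (vadd b (dk k)) i (d i) Ha' Hb'.
        have Hle : vle (vadd a (dk k)) (vadd b (dk k)).
        { intro j; unfold vadd; unfold vle in Hab; ptw j; lra. }
        have Hdi : 0 <= d i by unfold vle, vzero in Hd; ptw i; lra.
        have := H Hle Hdi Ha'' Hb''. rewrite !E. lra.
      + have E : dk k.+1 = dk k.
        { apply functional_extensionality => j; unfold dk.
          have H1 : (j < k.+1)%nat by apply: (leq_trans (ltn_ord j)); apply: leqW.
          have H2 : (j < k)%nat by apply: (leq_trans (ltn_ord j)).
          by rewrite H1 H2. }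
        rewrite E; exact IH. }
  have E : dk n = d.
  { apply functional_extensionality => j; unfold dk; by rewrite ltn_ord. }
  have := Main n; rewrite E; lra.
Qed.

Ltac bx := unfold inBox, vle, vzero, vadd, vsub, vjoin, vmeet;
    try split; let j := fresh "j" in intro j; ptw j; unfold Rmax, Rmin;
    repeat destruct Rle_dec; lra.

Theorem claim1 (n : nat) (ubar : Vec n) (f : Vec n -> R) (P : Vec n -> Prop)
  (x xstar z : Vec n) :
  vle vzero ubar ->
  (forall y, inBox ubar y -> 0 <= f y) ->
  DR_submodular ubar f ->
  subset_box ubar P ->
  (exists y, P y) ->
  vcompact P ->
  down_closed P ->
  convex_set P ->
  P xstar -> (forall y, P y -> f y <= f xstar) ->
  P x -> P z -> vle z (vsub ubar x) ->
  let zstar := vsub (vjoin x xstar) x in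
  f (vjoin x xstar) + f (vmeet x xstar) + f (vjoin z zstar) + f (vmeet z zstar)
    >= f xstar.
Proof.
  intros Hu Hf HDR Hsub _ _ _ _ Hxs _ Hx Hz Hzx zstar.
  have [Hx1 Hx2] := Hsub _ Hx. have [Hs1 Hs2] := Hsub _ Hxs.
  have [Hz1 Hz2] := Hsub _ Hz.
  unfold vle, vzero, vsub in *.
  have H1 := DR_vec _ _ _ HDR vzero zstar (vmeet x xstar).
  have E1 : vadd vzero (vmeet x xstar) = vmeet x xstar.
  { apply functional_extensionality => j; unfold vadd, vzero; lra. }
  have E2 : vadd zstar (vmeet x xstar) = xstar.
  { apply functional_extensionality => j; unfold vadd, zstar, vsub, vjoin, vmeet.
    unfold Rmax, Rmin; repeat destruct Rle_dec; lra. }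
  rewrite E1 E2 in H1.
  have H1' : f (vmeet x xstar) - f vzero >= f xstar - f zstar
    by apply: H1; unfold zstar; bx.
  have H2 := DR_vec _ _ _ HDR zstar (vjoin x xstar) (vsub z (vmeet z zstar)).
  have E3 : vadd zstar (vsub z (vmeet z zstar)) = vjoin z zstar.
  { apply functional_extensionality => j; unfold vadd, zstar, vsub, vjoin, vmeet.
    unfold Rmax, Rmin; repeat destruct Rle_dec; lra. }
  rewrite E3 in H2.
  have H2' : f (vjoin z zstar) - f zstar >=
     f (vadd (vjoin x xstar) (vsub z (vmeet z zstar))) - f (vjoin x xstar)
    by apply: H2; unfold zstar; bx.
  have F0 : 0 <= f vzero by apply: Hf; unfold zstar; bx.
  have F1 : 0 <= f (vadd (vjoin x xstar) (vsub z (vmeet z zstar))) by apply: Hf; unfold zstar; bx.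
  have F2 : 0 <= f (vmeet z zstar) by apply: Hf; unfold zstar; bx.
  lra.
Qed.
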